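(* Let $G$ be a sofic group and $D$ a division ring. Then the group ring $D(G)$ is stably finite, i.e. for every $n\ge1$ the matrix ring $\mathrm{Mat}_{n\times n}(D(G))$ is directly finite: whenever $a,b\in \mathrm{Mat}_{n\times n}(D(G))$ satisfy $ab=1$, then $ba=1$. *)

(* Defs.v *)
From HB Require Import structures.
From mathcomp Require Import all_boot all_order all_algebra all_fingroup.
From mathcomp Require Import boolp classical_sets fsbigop.
Set Implicit Arguments. Unset Strict Implicit. Unset Printing Implicit Defensive.
Import Order.TTheory GRing.Theory Num.Theory.
Local Open Scope ring_scope.

(* ---------- Sofic groups ----------
   G (a possibly infinite group, MathComp's [groupType]) is sofic if for every
   finite F ⊆ G and every ε > 0 there are a nonempty finite set X = 'I_m and a
   map σ : G -> Sym(X) such that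
     * for g, h ∈ F:  d_H(σ(gh), σ(g)σ(h)) ≤ ε   (normalized Hamming distance)
     * for g ∈ F, g ≠ 1:  d_H(σ(g), id) ≥ 1 - ε, i.e. σ(g) fixes ≤ ε|X| points. *)
Definition sofic (G : groupType) : Prop :=
  forall (F : seq G) (eps : rat), 0 < eps ->
  exists (m : nat) (sigma : G -> {perm 'I_m}),
    (0 < m)%N /\
    (forall g h, g \in F -> h \in F ->
       (#|[set x : 'I_m | sigma (g * h)%g x != sigma g (sigma h x)]|%:R
          <= eps * m%:R)) /\
    (forall g, g \in F -> g != 1%g ->
       (#|[set x : 'I_m | sigma g x == x]|%:R <= eps * m%:R)).

(* ---------- Group ring D(G) ----------
   An element of D(G) is a finitely supported function G -> D; the product is
   convolution (a b)(g) = Σ_h a(h) b(h^{-1} g) (a finite sum). *)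
Definition fin_supp (G : groupType) (D : nmodType) (f : G -> D) : Prop :=
  exists s : seq G, forall g, f g != 0 -> g \in s.

Definition gr_conv (G : groupType) (D : pzSemiRingType) (a b : G -> D) : G -> D :=
  fun g => \sum_(h \in [set: G]%classic) a h * b (h^-1 * g)%g.

Definition gr_mxmul (G : groupType) (D : pzSemiRingType) (n : nat)
  (A B : 'I_n -> 'I_n -> G -> D) : 'I_n -> 'I_n -> G -> D :=
  fun i j g => \sum_(k < n) gr_conv (A i k) (B k j) g.

Definition gr_mx1 (G : groupType) (D : pzSemiRingType) (n : nat)
  : 'I_n -> 'I_n -> G -> D :=
  fun i j g => if (i == j) && (g == 1%g) then 1 else 0.

Definition gr_mx_fin (G : groupType) (D : nmodType) (n : nat)
  (A : 'I_n -> 'I_n -> G -> D) : Prop := forall i j, fin_supp (A i j).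

(* Main.v *)
Require Import Defs.
From HB Require Import structures.
From mathcomp Require Import all_boot all_order all_algebra all_fingroup.
From mathcomp Require Import boolp fsbigop zify.
From mathcomp Require classical_sets.
Set Implicit Arguments. Unset Strict Implicit. Unset Printing Implicit Defensive.
Import GRing.Theory.
Local Open Scope ring_scope.

Section LA.
Variable D : unitRingType.

Definition mm (I J K : finType) (A : I -> J -> D) (B : J -> K -> D) : I -> K -> D :=
  fun i k => \sum_j A i j * B j k.
Definition dl (I : finType) : I -> I -> D := fun i j => (i == j)%:R.
Definition msub (I J : finType) (A B : I -> J -> D) : I -> J -> D :=
  fun i j => A i j - B i j.
Definition rk (I J : finType) (M : I -> J -> D) (k : nat) : Prop :=
  exists (K : finType) (U : I -> K -> D) (V : K -> J -> D), (#|K| <= k)%N /\ M = mm U V.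

Lemma sum_dl_l (I : finType) (i : I) (F : I -> D) : \sum_j (i == j)%:R * F j = F i.
Proof.
rewrite (bigD1 i) //= eqxx mul1r big1 ?addr0 // => j; rewrite eq_sym => /negbTE ->.
by rewrite mul0r.
Qed.

Lemma sum_dl_r (I : finType) (i : I) (F : I -> D) : \sum_j F j * (j == i)%:R = F i.
Proof.
rewrite (bigD1 i) //= eqxx mulr1 big1 ?addr0 // => j /negbTE ->.
by rewrite mulr0.
Qed.

Lemma sum_dl_l2 (I : finType) (i : I) (F : I -> D) : \sum_j (j == i)%:R * F j = F i.
Proof. by under eq_bigr do rewrite eq_sym; rewrite sum_dl_l. Qed.

Lemma sum_pick (I : finType) (i0 : I) (F : I -> D) :
  (forall i, i != i0 -> F i = 0) -> \sum_i F i = F i0.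
Proof. by move=> h; rewrite (bigD1 i0) //= big1 ?addr0. Qed.

Lemma mmA (I J K L : finType) (A : I -> J -> D) (B : J -> K -> D) (C : K -> L -> D) :
  mm (mm A B) C = mm A (mm B C).
Proof.
apply: funext => i; apply: funext => l; rewrite /mm.
under eq_bigr do rewrite big_distrl /=.
rewrite exchange_big; apply: eq_bigr => j _; rewrite big_distrr /=.
by apply: eq_bigr => k _; rewrite mulrA.
Qed.

Lemma mm1l (I J : finType) (A : I -> J -> D) : mm (@dl I) A = A.
Proof. by apply: funext => i; apply: funext => j; rewrite /mm /dl sum_dl_l. Qed.

Lemma mm1r (I J : finType) (A : I -> J -> D) : mm A (@dl J) = A.
Proof. by apply: funext => i; apply: funext => j; rewrite /mm /dl sum_dl_r. Qed.

Lemma mmBl (I J K : finType) (A B : I -> J -> D) (C : J -> K -> D) :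
  mm (msub A B) C = msub (mm A C) (mm B C).
Proof.
apply: funext => i; apply: funext => k; rewrite /mm /msub -sumrB.
by apply: eq_bigr => j _; rewrite mulrBl.
Qed.

Lemma mmBr (I J K : finType) (A : I -> J -> D) (B C : J -> K -> D) :
  mm A (msub B C) = msub (mm A B) (mm A C).
Proof.
apply: funext => i; apply: funext => k; rewrite /mm /msub -sumrB.
by apply: eq_bigr => j _; rewrite mulrBr.
Qed.

Lemma rk_mull (I J K : finType) (A : I -> J -> D) (M : J -> K -> D) k :
  rk M k -> rk (mm A M) k.
Proof. by case=> [L [U [V [hL ->]]]]; exists L, (mm A U), V; rewrite mmA. Qed.

Lemma rk_mulr (I J K : finType) (M : I -> J -> D) (A : J -> K -> D) k :
  rk M k -> rk (mm M A) k.
Proof. by case=> [L [U [V [hL ->]]]]; exists L, U, (mm V A); rewrite mmA. Qed.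

Lemma rk_mono (I J : finType) (M : I -> J -> D) k k' :
  rk M k -> (k <= k')%N -> rk M k'.
Proof.
by case=> [L [U [V [hL ->]]]] hk; exists L, U, V; split => //; apply: leq_trans hk.
Qed.

Lemma rk_restr (I J I' J' : finType) (M : I -> J -> D) (f : I' -> I) (g : J' -> J) k :
  rk M k -> rk (fun i j => M (f i) (g j)) k.
Proof.
case=> [L [U [V [hL ->]]]]; exists L, (fun i t => U (f i) t), (fun t j => V t (g j)).
by split.
Qed.

Lemma rk_opp (I J : finType) (M : I -> J -> D) k :
  rk M k -> rk (fun i j => - M i j) k.
Proof.
case=> [L [U [V [hL ->]]]]; exists L, (fun i t => - U i t), V; split => //.
apply: funext => i; apply: funext => j; rewrite /mm -sumrN.
by apply: eq_bigr => t _; rewrite mulNr.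
Qed.

Lemma rk_add (I J : finType) (M N : I -> J -> D) k1 k2 :
  rk M k1 -> rk N k2 -> rk (fun i j => M i j + N i j) (k1 + k2).
Proof.
case=> [L1 [U1 [V1 [h1 ->]]]] [L2 [U2 [V2 [h2 ->]]]].
exists (L1 + L2)%type,
  (fun i t => match t with inl t1 => U1 i t1 | inr t2 => U2 i t2 end),
  (fun t j => match t with inl t1 => V1 t1 j | inr t2 => V2 t2 j end).
split; first by rewrite card_sum leq_add.
by apply: funext => i; apply: funext => j; rewrite /mm big_sumType.
Qed.

Lemma rk_cols (I J : finType) (M : I -> J -> D) (C : {set J}) :
  (forall i j, M i j != 0 -> j \in C) -> rk M #|C|.
Proof.
move=> hC; exists {x | x \in C}%type, (fun i t => M i (val t)), (fun t j => dl (val t) j).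
split; first by rewrite card_sig.
apply: funext => i; apply: funext => j; rewrite /mm /dl.
rewrite -(big_sub C (fun x => M i x * (x == j)%:R)) /=.
case: (boolP (j \in C)) => jC.
  rewrite (bigD1 j) //= eqxx mulr1 big1 ?addr0 // => x /andP[_ /negbTE ->].
  by rewrite mulr0.
rewrite big1; last by move=> x xC; case: eqP => [e|_]; [by subst; rewrite xC in jC|rewrite mulr0].
by apply/eqP; apply: contraNT jC => /hC.
Qed.


Hypothesis hD : forall x : D, x != 0 -> x \is a GRing.unit.

Lemma split_sum (J : finType) (j0 : J) (F : J -> D) :
  \sum_j F j = F j0 + \sum_(j : {x in predC1 j0}) F (val j).
Proof.
rewrite (bigD1 j0) //=; congr (_ + _).
by rewrite -(big_sub (predC1 j0) F).
Qed.

Lemma card_C1 (J : finType) (j0 : J) : #|{: {x in predC1 j0}}| = #|J|.-1.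
Proof. by rewrite card_sig -(cardC1 j0); apply: eq_card. Qed.

Section Rank1.
Variables (J : finType) (j0 : J) (c d : J -> D).
Definition r1 (c : J -> D) : J -> J -> D := fun j j' => dl j j' + (j == j0)%:R * c j'.

Lemma mm_r1 : mm (r1 c) (r1 d) = r1 (fun j => c j + d j + c j0 * d j).
Proof.
apply: funext => j; apply: funext => j''; rewrite /mm /r1.
have [->|hj] := eqVneq j j0; last first.
  rewrite mul0r addr0.
  rewrite (eq_bigr (fun j1 => dl j j1 * (dl j1 j'' + (j1 == j0)%:R * d j''))); last first.
    by move=> i _; rewrite mul0r addr0.
  by rewrite /dl sum_dl_l (negbTE hj) mul0r addr0.
rewrite mul1r.
under eq_bigr do rewrite mulrDl.
rewrite big_split /= /dl sum_dl_l eqxx mul1r.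
under eq_bigr do rewrite mulrDr.
rewrite big_split /= sum_dl_r.
rewrite (@sum_pick _ j0); last by move=> i /negbTE ->; rewrite !(mul0r, mulr0).
rewrite eqxx !mul1r.
by rewrite !addrA; congr (_ + _); rewrite -!addrA; congr (_ + _); rewrite addrC.
Qed.
End Rank1.

Lemma r1_dl (J : finType) (j0 : J) (c : J -> D) :
  (forall j, c j = 0) -> r1 j0 c = @dl J.
Proof.
move=> h; apply: funext => j; apply: funext => j'; by rewrite /r1 h mulr0 addr0.
Qed.

Lemma elim_main s : forall (I J : finType) (X : I -> J -> D) (Y : J -> I -> D),
  #|I| = s -> mm X Y = @dl I ->
  (#|I| <= #|J|)%N /\ rk (msub (@dl J) (mm Y X)) (#|J| - #|I|).
Proof.
elim: s => [|s IH] I J X Y hs hXY.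
  split; first by rewrite hs.
  have -> : mm Y X = fun _ _ => 0.
    apply: funext => j; apply: funext => j'; rewrite /mm big1 // => i _.
    by have := card0_eq hs i; rewrite !inE.
  exists J, (@dl J), (@dl J); split; first by rewrite hs subn0.
  rewrite mm1l; apply: funext => j; apply: funext => j'; by rewrite /msub subr0.
have [i0 _] : exists i0 : I, i0 \in I by apply/card_gt0P; rewrite hs.
pose x := X i0.
have hx1 : \sum_j x j * Y j i0 = 1.
  by have := congr1 (fun M => M i0 i0) hXY; rewrite /mm /dl /= eqxx.
have [j0 hj0] : exists j0, x j0 != 0.
  apply/existsP; apply: contraT; rewrite negb_exists => /forallP h.
  move: hx1; rewrite big1 => [/eqP|j _]; first by rewrite eq_sym oner_eq0.
  by have := h j; rewrite negbK => /eqP ->; rewrite mul0r.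
pose p := x j0.
have hp : p \is a GRing.unit := hD hj0.
pose c := fun j => p^-1 * (dl j0 j - x j).
pose d := fun j => x j - dl j0 j.
pose T := r1 j0 c.
pose T' := r1 j0 d.
have hcj0 : c j0 = p^-1 - 1 by rewrite /c /dl eqxx mulrBr mulr1 mulVr.
have hdj0 : d j0 = p - 1 by rewrite /d /dl eqxx.
have hTT' : mm T T' = @dl J.
  rewrite /T /T' mm_r1 r1_dl // => j; rewrite hcj0 mulrBl mul1r.
  rewrite -addrA (addrC (d j)) subrK /c /d -mulrDr.
  by rewrite addrA subrK subrr mulr0.
have hT'T : mm T' T = @dl J.
  rewrite /T /T' mm_r1 r1_dl // => j; rewrite hdj0 mulrBl mul1r.
  rewrite -addrA (addrC (c j)) subrK /c /d mulVKr //.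
  by rewrite addrA subrK subrr.
pose X' := mm X T.
pose Y' := mm T' Y.
have hX'Y' : mm X' Y' = @dl I.
  by rewrite /X' /Y' !mmA -(mmA T) hTT' mm1l.
have hX'0 : forall j, X' i0 j = dl j0 j.
  move=> j; rewrite /X' /mm /T /r1.
  under eq_bigr do rewrite mulrDr.
  rewrite big_split /= /dl sum_dl_r.
  under eq_bigr => i _ do rewrite mulrA mulr_natr -mulr_natl.
  rewrite (@sum_pick _ j0); last by move=> i /negbTE ->; rewrite !mul0r.
  rewrite eqxx mul1r -/x -/p /c mulrA mulrV // mul1r.
  by rewrite addrC subrK.
have hY'0 : forall i, Y' j0 i = dl i0 i.
  move=> i; rewrite /Y' /mm /T' /r1.
  under eq_bigr do rewrite eqxx mul1r.
  have -> : \sum_j (dl j0 j + d j) * Y j i = \sum_j x j * Y j i.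
    by apply: eq_bigr => j _; rewrite /d addrC subrK.
  by have := congr1 (fun M => M i0 i) hXY; rewrite /mm.
pose I' := {y in predC1 i0}.
pose J' := {y in predC1 j0}.
pose X'' : I' -> J' -> D := fun i j => X' (val i) (val j).
pose Y'' : J' -> I' -> D := fun j i => Y' (val j) (val i).
have hX''Y'' : mm X'' Y'' = @dl I'.
  apply: funext => i; apply: funext => i'.
  have := congr1 (fun M => M (val i) (val i')) hX'Y'; rewrite /mm /= (split_sum j0).
  have hi' : (i0 == sval i') = false by rewrite eq_sym; apply/negbTE; exact: (valP i').
  rewrite hY'0 /dl hi' mulr0 add0r => ->.
  by rewrite -(inj_eq val_inj).
have hcI : #|{: I'}| = s by rewrite card_C1 hs.
have hcJ : #|{: J'}| = #|J|.-1 by rewrite card_C1.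
have hJpos : (0 < #|J|)%N by apply/card_gt0P; exists j0.
have [hc [K [U [V [hK hUV]]]]] := IH I' J' X'' Y'' hcI hX''Y''.
have hX'j0 : forall i : I', X' (val i) j0 = - \sum_(j2 : J') X' (val i) (val j2) * Y' (val j2) i0.
  move=> i; have := congr1 (fun M => M (val i) i0) hX'Y'; rewrite /mm /= (split_sum j0).
  rewrite hY'0 /dl eqxx mulr1.
  have -> : (sval i == i0) = false by apply/negbTE; exact: (valP i).
  by move=> e; apply/eqP; rewrite -addr_eq0 e.
pose y2 := fun j2 : J' => Y' (val j2) i0.
pose Uh : J -> K -> D := fun j t => match (insub j : option J') with Some j1 => U j1 t | None => 0 end.
pose Vh : K -> J -> D := fun t j' => match (insub j' : option J') with
   Some j2 => V t j2 | None => - \sum_(j2 : J') V t j2 * y2 j2 end.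
have hmain : msub (@dl J) (mm Y' X') = mm Uh Vh.
  apply: funext => j; apply: funext => j'.
  have [-> | hj] := eqVneq j j0.
    rewrite /mm /Uh insubF /=; last by rewrite inE eqxx.
    rewrite big1; last by move=> t _; rewrite mul0r.
    rewrite /msub /mm.
    under eq_bigr do rewrite hY'0.
    by rewrite /dl sum_dl_l hX'0 subrr.
  pose j1 : J' := Sub j hj.
  have -> : j = val j1 by [].
  have hUV' := congr1 (fun M => M j1) hUV.
  have [-> | hj'] := eqVneq j' j0.
    rewrite /mm /Uh /Vh valK insubF /=; last by rewrite inE eqxx.
    under eq_bigr do rewrite mulrN big_distrr /=.
    rewrite sumrN exchange_big /=.
    under eq_bigr => j2 _ do under eq_bigr do rewrite mulrA.
    under eq_bigr => j2 _ do rewrite -big_distrl /=.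
    have hUVe : forall j2, \sum_t U j1 t * V t j2 = msub (@dl J') (mm Y'' X'') j1 j2.
      by move=> j2; rewrite hUV.
    under eq_bigr => j2 _ do rewrite hUVe.
    rewrite /msub (split_sum i0) hX'0 /dl eqxx mulr1.
    have -> : (sval j1 == j0) = false by apply/negbTE; exact: (valP j1).
    rewrite sub0r.
    under eq_bigr do rewrite mulrBl.
    rewrite sumrB sum_dl_l; congr (- _); congr (_ + _).
    under eq_bigr do rewrite hX'j0 mulrN big_distrr /=.
    rewrite sumrN; congr (- _); rewrite exchange_big /=.
    apply: eq_bigr => j2 _; rewrite /mm big_distrl /=.
    by apply: eq_bigr => i _; rewrite /Y'' /X'' /y2 mulrA.
  pose j2 : J' := Sub j' hj'.
  have -> : j' = val j2 by [].
  rewrite /mm /Uh /Vh !valK /=.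
  have -> : \sum_t U j1 t * V t j2 = msub (@dl J') (mm Y'' X'') j1 j2 by rewrite hUV.
  rewrite /msub (split_sum i0) hX'0 /dl.
  have -> : (j0 == sval j2) = false by rewrite eq_sym; apply/negbTE; exact: (valP j2).
  rewrite mulr0 add0r -(inj_eq val_inj) /=.
  by rewrite /mm.
have hconj : msub (@dl J) (mm Y X) = mm T (mm (msub (@dl J) (mm Y' X')) T').
  rewrite mmBl mm1l mmBr hTT' /Y' /X' !mmA hTT' mm1r -(mmA T T') hTT' mm1l.
  done.
rewrite hcI hcJ in hc.
split; first by rewrite hs; move: hc hJpos; clear; lia.
rewrite hconj; apply: rk_mull; apply: rk_mulr; rewrite hmain.
exists K, Uh, Vh; split => //; apply: (leq_trans hK).
by rewrite hcI hcJ hs; move: hc hJpos; clear; lia.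
Qed.

Lemma rk_lower (I X Y : finType) (M : X -> Y -> D) r (rho : I -> X) (ka : I -> Y) (w : D) :
  w \is a GRing.unit -> rk M r ->
  (forall l l', M (rho l) (ka l') = w * (l == l')%:R) -> (#|I| <= r)%N.
Proof.
move=> hw [K [U [V [hK hM]]]] hMe.
pose X' : I -> K -> D := fun l t => w^-1 * U (rho l) t.
pose Y' : K -> I -> D := fun t l' => V t (ka l').
have h : mm X' Y' = @dl I.
  apply: funext => l; apply: funext => l'; rewrite /mm /X' /Y'.
  under eq_bigr do rewrite -mulrA.
  rewrite -big_distrr /=.
  have := hMe l l'; rewrite hM /mm => ->.
  by rewrite mulKr.
have [hc _] := elim_main (erefl #|I|) h.
exact: leq_trans hc hK.
Qed.

Lemma perturb (X : finType) (A B E : X -> X -> D) k :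
  mm A B = (fun i j => dl i j + E i j) -> rk E k -> rk (msub (@dl X) (mm B A)) k.
Proof.
move=> hAB [K [U [V [hK hE]]]].
pose Ap : X -> (X + K)%type -> D := fun x v => match v with inl y => A x y | inr t => U x t end.
pose Bp : (X + K)%type -> X -> D := fun v x => match v with inl y => B y x | inr t => - V t x end.
have h : mm Ap Bp = @dl X.
  apply: funext => x; apply: funext => x'; rewrite /mm big_sumType /=.
  have := congr1 (fun M => M x x') hAB; rewrite /mm /= => ->.
  rewrite hE /mm -addrA; under [X in _ + (_ + X)]eq_bigr do rewrite mulrN.
  by rewrite sumrN subrr addr0.
have [_ hr] := elim_main (erefl #|X|) h.
have := rk_restr (fun y : X => inl y) (fun y : X => inl y) hr.
rewrite card_sum addKn => hr'; apply: (rk_mono _ hK).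
by [].
Qed.

Lemma rk_sub3 (I J : finType) (N E2 E3 : I -> J -> D) k1 k2 k3 :
  rk N k1 -> rk E2 k2 -> rk E3 k3 ->
  rk (fun i j => (- N i j + E2 i j) + E3 i j) (k1 + k2 + k3).
Proof. by move=> h1 h2 h3; apply: rk_add => //; apply: rk_add => //; apply: rk_opp. Qed.

End LA.

Lemma SL (T : choiceType) (D : nmodType) (r : seq T) (F : T -> D) :
  uniq r -> (forall g, F g != 0 -> g \in r) ->
  \sum_(g \in (@classical_sets.setT T)) F g = \sum_(g <- r) F g.
Proof.
move=> ur hr; rewrite (fsbig_seq _ _ ur); apply/esym/fsbig_widen => // x [_ /= xr].
apply/eqP; apply: contraT => /hr; move: xr; rewrite /=.
by move=> h1 h2; exfalso; apply: h1.
Qed.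

Lemma greedy (T : finType) (N : T -> {set T}) d :
  (forall x, (#|N x| <= d)%N) -> (forall x y, (y \in N x) = (x \in N y)) ->
  forall A : {set T}, exists Q : {set T}, Q \subset A /\
    (forall x y, x \in Q -> y \in Q -> x != y -> y \notin N x) /\
    (#|A| <= d.+1 * #|Q|)%N.
Proof.
move=> hN hsym A; move: {2}#|A| (leqnn #|A|) => k; elim: k A => [|k IH] A hA.
  exists set0; split; first exact: sub0set.
  split; first by move=> x y; rewrite in_set0.
  by move: hA; rewrite leqn0 => /eqP ->.
case: (set_0Vmem A) => [-> | [x xA]].
  exists set0; split; first exact: sub0set.
  split; first by move=> ? y; rewrite in_set0.
  by rewrite cards0.
pose S := x |: N x.
pose A' := A :\: S.
have hA' : (#|A'| <= k)%N.
  have hs : A' \subset A :\ x.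
    by apply/subsetP=> y; rewrite !inE negb_or => /andP[/andP[-> _] ->].
  have := subset_leq_card hs; have := cardsD1 x A; rewrite xA.
  by move: hA; clear; lia.
have [Q' [sQ' [iQ' cQ']]] := IH A' hA'.
have xQ' : x \notin Q'.
  by apply: contraTN isT => xq; move/subsetP: sQ' => /(_ x xq); rewrite !inE eqxx.
exists (x |: Q'); split.
  by rewrite subUset sub1set xA (subset_trans sQ') ?subsetDl.
split.
  move=> u v; rewrite !inE => /orP[/eqP -> | uQ] /orP[/eqP -> | vQ]; rewrite ?eqxx //.
  - move=> _; move/subsetP: sQ' => /(_ v vQ); rewrite !inE negb_or.
    by case/andP => /andP[].
  - move=> _; move/subsetP: sQ' => /(_ u uQ); rewrite !inE negb_or.
    by case/andP => /andP[_]; rewrite hsym.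
  - by apply: iQ'.
rewrite cardsU1 xQ' -(cardsID S A).
have h1 : (#|A :&: S| <= d.+1)%N.
  apply: leq_trans (subset_leq_card (subsetIr A S)) _.
  rewrite /S cardsU1; have := leq_b1 (x \notin N x); have := hN x; clear; lia.
move: h1 cQ'; rewrite -/A'; clear; nia.
Qed.

Lemma mem_bigcup_seq (I : eqType) (T : finType) (r : seq I) (A : I -> {set T}) i x :
  i \in r -> x \in A i -> x \in \bigcup_(j <- r) A j.
Proof.
elim: r => [//|j r IH]; rewrite inE big_cons inE => /orP[/eqP <- -> // | ir xA].
by rewrite IH ?orbT.
Qed.

Lemma card_bigcup_seq (I : eqType) (T : finType) (r : seq I) (A : I -> {set T}) :
  (#|\bigcup_(j <- r) A j| <= \sum_(j <- r) #|A j|)%N.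
Proof.
elim: r => [|j r IH]; first by rewrite !big_nil cards0.
rewrite !big_cons cardsU; move: IH; clear; lia.
Qed.

Lemma sum_seq_bound (I : eqType) (r : seq I) (f : I -> nat) T M :
  (forall i, i \in r -> f i * T <= M)%N -> ((\sum_(j <- r) f j) * T <= size r * M)%N.
Proof.
elim: r => [|j r IH] h; first by rewrite big_nil.
rewrite big_cons /= mulnDl mulSn; apply: leq_add; first by apply: h; rewrite inE eqxx.
by apply: IH => i ir; apply: h; rewrite inE ir orbT.
Qed.

Section Sofic.
Variables (G : groupType) (D : unitRingType) (n m : nat) (sig : G -> {perm 'I_m}).
Variables (L L2 F : seq G).
Hypothesis uL2 : uniq L2.
Hypothesis hLL2 : forall h, h \in L -> h \in L2.
Hypothesis hmulL2 : forall h h', h \in L -> h' \in L -> (h * h')%g \in L2.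
Hypothesis h1L2 : 1%g \in L2.
Hypothesis hL2F : forall h, h \in L2 -> h \in F.
Hypothesis hinvF : forall h g, h \in L2 -> g \in L2 -> (h^-1 * g)%g \in F.

Definition good (q : 'I_m) : bool :=
  all (fun g => all (fun h => sig (g * h)%g q == sig g (sig h q)) F) F &&
  all (fun g => (g == 1%g) || (sig g q != q)) F.

Lemma good_mul q g h : good q -> g \in F -> h \in F -> sig (g * h)%g q = sig g (sig h q).
Proof. by case/andP => /allP h1 _ /h1 /allP h2 /h2 /eqP. Qed.

Lemma good_fix q g : good q -> g \in F -> g != 1%g -> sig g q != q.
Proof. by case/andP => _ /allP h1 /h1; case: (g == 1%g). Qed.

Lemma good_one q : good q -> sig 1%g q = q.
Proof.
move=> hq; have := good_mul hq (hL2F h1L2) (hL2F h1L2); rewrite mul1g.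
by move/perm_inj.
Qed.

Lemma good_sep q g g0 : good q -> g \in L2 -> g0 \in L2 -> g != g0 -> sig g q != sig g0 q.
Proof.
move=> hq hg hg0 hne; pose u := (g0^-1 * g)%g.
have hu : u \in F by apply: hinvF.
have hu1 : u != 1%g.
  apply: contraNneq hne => e; by rewrite -(mulVKg g0 g) -/u e mulg1.
apply: contraNneq (good_fix hq hu hu1) => e.
apply/eqP; apply: (@perm_inj _ (sig g0)).
by rewrite -(good_mul hq (hL2F hg0) hu) /u mulVKg.
Qed.

Definition TL (y : G -> D) (p q : 'I_m) : D := \sum_(g <- L2) y g * (p == sig g q)%:R.
Definition TM (A : 'I_n -> 'I_n -> G -> D) : ('I_n * 'I_m)%type -> ('I_n * 'I_m)%type -> D :=
  fun u v => TL (A u.1 v.1) u.2 v.2.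

Lemma TL_sum (I : finType) (Y : I -> G -> D) p q :
  TL (fun g => \sum_k Y k g) p q = \sum_k TL (Y k) p q.
Proof.
rewrite /TL; under eq_bigr do rewrite big_distrl /=.
by rewrite exchange_big.
Qed.

Lemma natC (b : bool) (y : D) : y * b%:R = b%:R * y.
Proof. by rewrite mulr_natr mulr_natl. Qed.

Lemma CA (x y : G -> D) (hx : forall g, x g != 0 -> g \in L) (hy : forall g, y g != 0 -> g \in L)
  p q : good q -> \sum_r TL x p r * TL y r q = TL (gr_conv x y) p q.
Proof.
move=> hq.
have e1 : \sum_r TL x p r * TL y r q =
          \sum_(h' <- L2) TL x p (sig h' q) * y h'.
  rewrite /TL.
  under eq_bigr do rewrite big_distrr /=.
  rewrite exchange_big /=; apply: eq_bigr => h' _.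
  under eq_bigr do rewrite natC mulrA.
  by rewrite -big_distrl /= sum_dl_r.
rewrite e1 {e1} /TL.
under eq_bigr do rewrite big_distrl /=.
rewrite exchange_big /=.
have e2 : forall g, gr_conv x y g = \sum_(h <- L2) x h * y (h^-1 * g)%g.
  move=> g; rewrite /gr_conv; apply: SL => // h.
  by apply: contraR => hh; rewrite (_ : x h = 0) ?mul0r //; apply/eqP; apply: contraR hh => /hx /hLL2.
under [RHS]eq_bigr do rewrite e2 big_distrl /=.
rewrite [RHS]exchange_big /=.
apply: eq_big_seq => h hh.
have [xh0|xh0] := eqVneq (x h) 0.
  rewrite big1_seq ?big1_seq // => i _; rewrite xh0 ?mul0r //.
have hL : h \in L by apply: hx.
transitivity (x h * \sum_(h' <- L2) y h' * (p == sig (h * h')%g q)%:R).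
  rewrite big_distrr /=; apply: eq_big_seq => h' hh'.
  by rewrite good_mul ?hL2F // -mulrA natC mulrA.
transitivity (x h * \sum_(g <- L2) y (h^-1 * g)%g * (p == sig g q)%:R); last first.
  by rewrite big_distrr /=; apply: eq_bigr => g _; rewrite !mulrA.
congr (_ * _).
rewrite -(@SL _ _ L2 (fun h' => y h' * (p == sig (h * h')%g q)%:R)) //; last first.
  move=> g; apply: contraR => hg; rewrite (_ : y g = 0) ?mul0r //.
  by apply/eqP; apply: contraR hg => /hy /hLL2.
rewrite -(@SL _ _ L2 (fun g => y (h^-1 * g)%g * (p == sig g q)%:R)) //; last first.
  move=> g; apply: contraR => hg; rewrite (_ : y _ = 0) ?mul0r //.
  apply/eqP; apply: contraR hg => /hy hy'.
  by rewrite -(mulVKg h g); apply: hmulL2.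
rewrite [RHS](reindex_fsbigT (fun h' => (h * h')%g)) /=; last first.
  by exists (fun g => (h^-1 * g)%g) => g; rewrite ?mulKg ?mulVKg.
by apply: eq_fsbigr => h' _ /=; rewrite mulKg.
Qed.

Lemma TMmul (A B : 'I_n -> 'I_n -> G -> D)
  (hA : forall i j g, A i j g != 0 -> g \in L) (hB : forall i j g, B i j g != 0 -> g \in L)
  u v : good v.2 -> mm (TM A) (TM B) u v = TM (gr_mxmul A B) u v.
Proof.
move=> hv; rewrite /mm /TM.
rewrite -(pair_bigA _ (fun k r => TL (A u.1 k) u.2 r * TL (B k v.1) r v.2)) /=.
under eq_bigr => k _ do rewrite (CA (hA u.1 k) (hB k v.1) _ hv).
by rewrite -TL_sum.
Qed.

Lemma TM1 u v : good v.2 -> TM (@gr_mx1 G D n) u v = @dl D _ u v.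
Proof.
move=> hv; rewrite /TM /TL /gr_mx1 (bigD1_seq 1%g) //= big1_seq; last first.
  by move=> g /andP[/negbTE -> _]; rewrite andbF mul0r.
rewrite addr0 eqxx andbT good_one // /dl; case: u v hv => [i p] [j q] /= hv.
by rewrite xpair_eqE; case: (i == j); rewrite ?mul1r ?mul0r.
Qed.

Lemma TL_sep (y : G -> D) g0 q : (forall g, y g != 0 -> g \in L2) -> g0 \in L2 -> good q ->
  TL y (sig g0 q) q = y g0.
Proof.
move=> hy hg0 hq; rewrite /TL (bigD1_seq g0) //= eqxx mulr1 big1_seq ?addr0 //.
move=> g /andP[hne hg]; rewrite eq_sym (negbTE (good_sep hq hg hg0 hne)).
by rewrite mulr0.
Qed.

Lemma TL_indep (y : G -> D) g0 q q' : (forall g, g \in L2 -> sig g0 q != sig g q') ->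
  TL y (sig g0 q) q' = 0.
Proof.
move=> h; rewrite /TL big1_seq // => g /andP[_ hg].
by rewrite (negbTE (h g hg)) mulr0.
Qed.

Lemma bad_bound Tn :
  (forall g h, g \in F -> h \in F ->
     #|[set x | sig (g * h)%g x != sig g (sig h x)]| * Tn <= m)%N ->
  (forall g, g \in F -> g != 1%g -> #|[set x | sig g x == x]| * Tn <= m)%N ->
  (#|[set q | ~~ good q]| * Tn <= (size F * size F + size F) * m)%N.
Proof.
move=> hmul hfix.
pose S g h := [set x | sig (g * h)%g x != sig g (sig h x)].
pose Fx g := if g == 1%g then set0 else [set x | sig g x == x].
pose U1 := \bigcup_(g <- F) \bigcup_(h <- F) S g h.
pose U2 := \bigcup_(g <- F) Fx g.
have hsub : [set q | ~~ good q] \subset U1 :|: U2.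
  apply/subsetP => q; rewrite inE /good negb_and => /orP[/allPn [g hg] | /allPn [g hg]].
    move=> /allPn [h hh hn]; rewrite inE; apply/orP; left.
    by apply: (mem_bigcup_seq hg); apply: (mem_bigcup_seq hh); rewrite inE.
  rewrite negb_or negbK => /andP[hg1 hgq]; rewrite inE; apply/orP; right.
  by apply: (mem_bigcup_seq hg); rewrite /Fx (negbTE hg1) inE.
have c1 : (#|U1| * Tn <= size F * (size F * m))%N.
  apply: leq_trans (leq_mul (card_bigcup_seq _ _) (leqnn Tn)) _.
  apply: sum_seq_bound => g hg.
  apply: leq_trans (leq_mul (card_bigcup_seq _ _) (leqnn Tn)) _.
  by apply: sum_seq_bound => h hh; apply: hmul.
have c2 : (#|U2| * Tn <= size F * m)%N.
  apply: leq_trans (leq_mul (card_bigcup_seq _ _) (leqnn Tn)) _.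
  apply: sum_seq_bound => g hg; rewrite /Fx.
  by case: eqP => [_|/eqP hg1]; [rewrite cards0 | apply: hfix].
have c3 := subset_leq_card hsub.
have c4 : (#|U1 :|: U2| <= #|U1| + #|U2|)%N by rewrite cardsU leq_subr.
have c5 := leq_mul (leq_trans c3 c4) (leqnn Tn).
rewrite mulnDl in c5.
move: c1 c2 c5; clear; nia.
Qed.

End Sofic.

Import Num.Theory.

Lemma conv_supp (G : groupType) (D : unitRingType) (L L2 : seq G) (x y : G -> D) g :
  (forall h h', h \in L -> h' \in L -> (h * h')%g \in L2) ->
  (forall g, x g != 0 -> g \in L) -> (forall g, y g != 0 -> g \in L) ->
  gr_conv x y g != 0 -> g \in L2.
Proof.
move=> hm hx hy; rewrite /gr_conv => hne.
have [h hh] : exists h, x h * y (h^-1 * g)%g != 0.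
  apply: contrapT => hn; move/eqP: hne; apply.
  apply: fsbig1 => h _; apply/eqP; apply: contraT => hh; exfalso; apply: hn; by exists h.
have hxh : x h != 0 by apply: contraNneq hh => ->; rewrite mul0r.
have hyh : y (h^-1 * g)%g != 0 by apply: contraNneq hh => ->; rewrite mulr0.
by rewrite -(mulVKg h g); apply: hm; [apply: hx | apply: hy].
Qed.

Lemma mxmul_supp (G : groupType) (D : unitRingType) n (L L2 : seq G)
  (A B : 'I_n -> 'I_n -> G -> D) i j g :
  (forall h h', h \in L -> h' \in L -> (h * h')%g \in L2) ->
  (forall i j g, A i j g != 0 -> g \in L) -> (forall i j g, B i j g != 0 -> g \in L) ->
  gr_mxmul A B i j g != 0 -> g \in L2.
Proof.
move=> hm hA hB; rewrite /gr_mxmul => hne.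
have [k hk] : exists k, gr_conv (A i k) (B k j) g != 0.
  apply: contrapT => hn; move/eqP: hne; apply.
  apply: big1 => k _; apply/eqP; apply: contraT => hh; exfalso; apply: hn; by exists k.
exact: conv_supp hm (hA i k) (hB k j) hk.
Qed.

Lemma zid (V : zmodType) (P Q d R : V) : (P - d) + (Q - P) + (d - R) = Q - R.
Proof.
have e1 : (P - d) + (Q - P) = Q - d by rewrite addrC addrA subrK.
by rewrite e1 addrA subrK.
Qed.

Unset Implicit Arguments. Set Strict Implicit.

Theorem mainTheorem2 (G : groupType) (D : unitRingType)
  (hD : forall x : D, x != 0 -> x \is a GRing.unit)
  (hG : sofic G) (n : nat) (hn : (1 <= n)%N)
  (a b : 'I_n -> 'I_n -> G -> D)
  (ha : gr_mx_fin a) (hb : gr_mx_fin b) :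
  gr_mxmul a b = @gr_mx1 G D n -> gr_mxmul b a = @gr_mx1 G D n.
Proof.
move=> hab.
have [fa hfa] := @choice _ _ (fun (ij : 'I_n * 'I_n) (s : seq G) =>
   forall g, a ij.1 ij.2 g != 0 -> g \in s) (fun ij => ha ij.1 ij.2).
have [fb hfb] := @choice _ _ (fun (ij : 'I_n * 'I_n) (s : seq G) =>
   forall g, b ij.1 ij.2 g != 0 -> g \in s) (fun ij => hb ij.1 ij.2).
pose L0 := flatten [seq fa ij ++ fb ij | ij <- enum {: 'I_n * 'I_n}].
pose L : seq G := undup (1%g :: L0).
have hL0 : forall ij g, (g \in fa ij) || (g \in fb ij) -> g \in L.
  move=> ij g hg; rewrite mem_undup inE; apply/orP; right.
  apply/flattenP; exists (fa ij ++ fb ij); last by rewrite mem_cat.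
  by apply/mapP; exists ij; rewrite ?mem_enum.
have hLa : forall i j g, a i j g != 0 -> g \in L.
  by move=> i j g /(hfa (i, j)) h; apply: (hL0 (i, j)); rewrite h.
have hLb : forall i j g, b i j g != 0 -> g \in L.
  by move=> i j g /(hfb (i, j)) h; apply: (hL0 (i, j)); rewrite h orbT.
have h1L : 1%g \in L by rewrite mem_undup inE eqxx.
pose L2 : seq G := undup [seq (h * h')%g | h <- L, h' <- L].
have uL2 : uniq L2 by apply: undup_uniq.
have hmulL2 : forall h h', h \in L -> h' \in L -> (h * h')%g \in L2.
  by move=> h h' hh hh'; rewrite mem_undup; apply: allpairs_f.
have hLL2 : forall h, h \in L -> h \in L2.
  by move=> h hh; rewrite -[h]mul1g; apply: hmulL2.
have h1L2 : 1%g \in L2 by apply: hLL2.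
pose F : seq G := undup (L2 ++ [seq (h^-1 * g)%g | h <- L2, g <- L2]).
have hL2F : forall h, h \in L2 -> h \in F by move=> h hh; rewrite mem_undup mem_cat hh.
have hinvF : forall h g, h \in L2 -> g \in L2 -> (h^-1 * g)%g \in F.
  move=> h g hh hg; rewrite mem_undup mem_cat; apply/orP; right.
  by apply: (allpairs_f (fun h g => (h^-1 * g)%g)).
apply: funext => i0; apply: funext => j0; apply: funext => g0.
apply/eqP; apply: contraT => hne.
pose cv := gr_mxmul b a i0 j0 g0 - @gr_mx1 G D n i0 j0 g0.
have hcv : cv != 0 by rewrite subr_eq0.
have hsba : forall i j g, gr_mxmul b a i j g != 0 -> g \in L2.
  by move=> i j g; apply: mxmul_supp hmulL2 hLb hLa.
have hs1 : forall i j g, @gr_mx1 G D n i j g != 0 -> g \in L2.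
  move=> i j g; rewrite /gr_mx1; case: ifP => [/andP[_ /eqP ->] _ //|_].
  by rewrite eqxx.
have hg0 : g0 \in L2.
  move: hcv; rewrite /cv; have [h|h] := eqVneq (gr_mxmul b a i0 j0 g0) 0.
    by rewrite h sub0r oppr_eq0; apply: hs1.
  by move=> _; apply: hsba h.
pose s2 := size L2.
pose sF := size F.
pose P := (sF * sF + sF)%N.
pose Qc := (1 + 3 * n * (2 * s2).+1)%N.
pose Tn := (P * Qc + 1)%N.
have heps : (0 : rat) < (Tn%:R)^-1 by rewrite invr_gt0 ltr0n /Tn addn1.
have [m [sig [hm [hmul hfix]]]] := hG F _ heps.
have hconv : forall x, (x%:R <= (Tn%:R)^-1 * m%:R :> rat) -> (x * Tn <= m)%N.
  move=> x; rewrite ler_pdivlMl; last by rewrite ltr0n /Tn addn1.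
  rewrite -natrM ler_nat.
  by rewrite mulnC.
have hBb := @bad_bound G m sig F Tn
   (fun g h hg hh => hconv _ (hmul g h hg hh)) (fun g hg hg1 => hconv _ (hfix g hg hg1)).
set B := [set q | ~~ good sig F q] in hBb.
have hgood : forall q, q \notin B -> good sig F q by move=> q; rewrite inE negbK.
pose Ta := TM sig L2 a.
pose Tb := TM sig L2 b.
pose C : {set ('I_n * 'I_m)%type} := [set v | v.2 \in B].
have hC : #|C| = (n * #|B|)%N.
  have -> : C = setX [set: 'I_n] B by apply/setP => -[i q]; rewrite !inE.
  by rewrite cardsX cardsT card_ord.
have hcolC : forall v, v \notin C -> good sig F v.2 by move=> v; rewrite inE => /hgood.
pose E1 := msub (mm Ta Tb) (@dl D _).
have hE1 : rk E1 #|C|.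
  apply: rk_cols => u v; apply: contraR => /hcolC hv.
  rewrite /E1 /msub /Ta /Tb (TMmul uL2 hLL2 hmulL2 hL2F hLa hLb _ hv) hab.
  by rewrite (TM1 _ uL2 h1L2 hL2F _ hv) subrr.
have hAB : mm Ta Tb = (fun u v => @dl D _ u v + E1 u v).
  by apply: funext => u; apply: funext => v; rewrite /E1 /msub addrC subrK.
have hN := perturb hD hAB hE1.
pose E2 := msub (TM sig L2 (gr_mxmul b a)) (mm Tb Ta).
have hE2 : rk E2 #|C|.
  apply: rk_cols => u v; apply: contraR => /hcolC hv.
  by rewrite /E2 /msub /Ta /Tb (TMmul uL2 hLL2 hmulL2 hL2F hLb hLa _ hv) subrr.
pose E3 := msub (@dl D _) (TM sig L2 (@gr_mx1 G D n)).
have hE3 : rk E3 #|C|.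
  apply: rk_cols => u v; apply: contraR => /hcolC hv.
  by rewrite /E3 /msub (TM1 _ uL2 h1L2 hL2F _ hv) subrr.
pose M := msub (TM sig L2 (gr_mxmul b a)) (TM sig L2 (@gr_mx1 G D n)).
have hM : rk M (#|C| + #|C| + #|C|).
  have := rk_sub3 hN hE2 hE3.
  have -> : (fun u v => - msub (@dl D _) (mm Tb Ta) u v + E2 u v + E3 u v) = M.
    apply: funext => u; apply: funext => v; rewrite /M /E2 /E3 /msub.
    rewrite opprB; apply: zid.
  done.
pose N := fun q : 'I_m => [set q' | has (fun g => (sig g0 q == sig g q') || (sig g0 q' == sig g q)) L2].
have hNs : forall x y, (y \in N x) = (x \in N y).
  by move=> x y; rewrite !inE; apply: eq_has => g; rewrite orbC.
have hNc : forall q, (#|N q| <= (2 * s2))%N.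
  move=> q.
  pose S := [seq (sig g)^-1%g (sig g0 q) | g <- L2] ++ [seq (sig g0)^-1%g (sig g q) | g <- L2].
  have sub : N q \subset [set x in S].
    apply/subsetP => q'; rewrite !inE => /hasP [g hg /orP[/eqP e | /eqP e]].
      by rewrite mem_cat; apply/orP; left; apply/mapP; exists g => //; rewrite e permK.
    by rewrite mem_cat; apply/orP; right; apply/mapP; exists g => //; rewrite -e permK.
  apply: leq_trans (subset_leq_card sub) _.
  rewrite cardsE; apply: leq_trans (card_size _) _.
  by rewrite size_cat !size_map /s2 addnn mul2n.
have [Q [sQ [iQ cQ]]] := greedy hNc hNs (~: B).
have hQB : forall q, q \in Q -> good sig F q.
  by move=> q hq; apply: hgood; move/subsetP: sQ => /(_ q hq); rewrite inE.
have hlow : (#|{: {x | x \in Q}}| <= #|C| + #|C| + #|C|)%N.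
  apply: (@rk_lower D hD {x | x \in Q} _ _ M _ (fun l => (i0, sig g0 (val l)))
     (fun l => (j0, val l)) cv (hD _ hcv) hM).
  move=> l l'; rewrite /M /msub /TM /=.
  have [e|hne'] := eqVneq l l'.
    rewrite -e mulr1 (TL_sep uL2 hL2F hinvF (hsba i0 j0) hg0 (hQB _ (valP l))).
    by rewrite (TL_sep uL2 hL2F hinvF (hs1 i0 j0) hg0 (hQB _ (valP l))).
  rewrite mulr0.
  have hind : forall g, g \in L2 -> sig g0 (val l) != sig g (val l').
    move=> g hg; have := iQ _ _ (valP l) (valP l').
    rewrite (inj_eq val_inj) hne' => /(_ isT); rewrite inE => /hasPn /(_ g hg).
    by rewrite negb_or => /andP[].
  by rewrite !(TL_indep _ hind) subrr.
rewrite card_sig in hlow.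
have hcQ : #|[pred x | x \in Q]| = #|Q| by apply: eq_card.
rewrite hcQ hC in hlow.
have hcB := cardsC B; rewrite card_ord in hcB.
have h1 : (m <= #|B| * Qc)%N.
  have h0 := leq_mul (leqnn (2 * s2).+1) hlow.
  rewrite /Qc; move: h0 cQ hcB; clear; nia.
have h2 := leq_mul h1 (leqnn Tn).
have h3 := leq_mul hBb (leqnn Qc).
exfalso; move: h2 h3 hm; rewrite /Tn -/P; clear; nia.
Qed.
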